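(* Let $0<c<1$, $1<t<2$, $0<b<1$, put $a_n=c^{t^n}$ and $F_n(z,w)=(z^2+a_nw,\ a_nz)$ for $n\geq1$. Let $\Omega=\{(z,w)\in\mathbb{C}^2: F_n\circ\cdots\circ F_1(z,w)\to0\}$ and let $K\subseteq\Omega$ be compact. Writing $(z_n,w_n)=F_n\circ\cdots\circ F_1(z,w)$ and $\delta_n=\max\{|z_n|,|w_n|:(z,w)\in K\}$, there exists $n_0$ such that $\delta_{n+k}\leq a_{n+k+1}b^k$ for all $n\geq n_0$ and all $k\geq0$. *)

(* Defs.v *)
From HB Require Import structures.
From mathcomp Require Import all_boot all_order all_algebra.
From mathcomp Require Import all_classical all_reals all_analysis.
From mathcomp.real_closed Require Import complex.
Export complex.
Import Order.TTheory GRing.Theory Num.Theory.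
Import numFieldNormedType.Exports.
Set Implicit Arguments. Unset Strict Implicit. Unset Printing Implicit Defensive.
Local Open Scope ring_scope.
Local Open Scope classical_set_scope.

(* Equip C = R[i] with its standard (norm) topology / metric, via the generic
   construction of MathComp-Analysis for numeric fields (R[i] is a
   numClosedFieldType whose norm is the modulus). *)
HB.instance Definition _ (R : rcfType) := PseudoPointedMetric.copy R[i] (R[i]^o).

Definition aseq (R : realType) (c t : R) (n : nat) : R := c `^ (t ^+ n).

Definition Fmap (R : realType) (c t : R) (n : nat) (p : R[i] * R[i]) : R[i] * R[i] :=
  (p.1 ^+ 2 + ((aseq c t n)%:C)%C * p.2, ((aseq c t n)%:C)%C * p.1).

Fixpoint iter_F (R : realType) (c t : R) (n : nat) (p : R[i] * R[i]) : R[i] * R[i] :=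
  match n with
  | 0%N => p
  | m.+1 => Fmap c t m.+1 (iter_F c t m p)
  end.

Definition Omega (R : realType) (c t : R) : set (R[i] * R[i]) :=
  [set p | (fun n => iter_F c t n p) @ \oo --> ((0 : R[i]), (0 : R[i]))].

(* delta_n = max {|z_n|, |w_n| : (z,w) in K}, written as the supremum (which is
   a maximum for compact K). The modulus `|z| : R[i] is real; complex.Re extracts it as an element of R. *)
Definition delta (R : realType) (c t : R) (K : set (R[i] * R[i])) (n : nat) : R :=
  sup [set Num.max (complex.Re `|(iter_F c t n p).1|) (complex.Re `|(iter_F c t n p).2|) | p in K].

(* Main.v *)
Require Import Defs.
From HB Require Import structures.
From mathcomp Require Import all_boot all_order all_algebra.
From mathcomp Require Import all_classical all_reals all_analysis.
From mathcomp.real_closed Require Import complex.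
From mathcomp Require Import ring lra.
Import Order.TTheory GRing.Theory Num.Theory.
Import numFieldNormedType.Exports.
Local Open Scope ring_scope.
Local Open Scope classical_set_scope.
Section Norms.
Variable R : realType.
Definition nr (z : R[i]) : R := complex.Re `|z|.

Lemma nrE z : `|z| = (nr z)%:C%C.
Proof. by rewrite /nr RRe_real // normr_real. Qed.

Lemma nr_ge0 z : 0 <= nr z.
Proof. by have := normr_ge0 z; rewrite nrE lecR. Qed.

Lemma nrM x y : nr (x * y) = nr x * nr y.
Proof. by apply: complexI; rewrite -nrE normrM !nrE -rmorphM. Qed.

Lemma nrD x y : nr (x + y) <= nr x + nr y.
Proof. by have := ler_normD x y; rewrite !nrE -rmorphD lecR. Qed.

Lemma nrX2 x : nr (x ^+ 2) = nr x ^+ 2.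
Proof. by rewrite !expr2 nrM. Qed.

Lemma nrC (a : R) : nr (a%:C)%C = `|a|.
Proof. by rewrite /nr normc_def /= expr0n /= addr0 sqrtr_sqr. Qed.

Lemma nrN x : nr (- x) = nr x.
Proof. by rewrite /nr normrN. Qed.

Lemma nr_lt x (e : R) : `|x| < e%:C%C -> nr x < e.
Proof. by rewrite nrE ltcR. Qed.
End Norms.
Arguments nr {R}.
Arguments nrE {R}.
Arguments nr_ge0 {R}.
Arguments nrM {R}.
Arguments nrD {R}.
Arguments nrX2 {R}.
Arguments nrC {R}.
Arguments nrN {R}.
Arguments nr_lt {R}.
Section Reals.
Variable R : realType.

Lemma bernoulli (u : R) k : 1 <= u -> 1 + k%:R * (u - 1) <= u ^+ k.
Proof.
move=> hu; elim: k => [|k IH]; first by rewrite mul0r addr0 expr0.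
rewrite exprS -natr1.
have h0 : 0 <= u - 1 by lra.
have h1 : 0 <= k%:R :> R by [].
have h2 : u * (1 + k%:R * (u - 1)) <= u * u ^+ k by rewrite ler_pM2l //; lra.
have h3 : 0 <= k%:R * (u - 1) * (u - 1) by rewrite mulr_ge0 // mulr_ge0.
rewrite mulrDl mul1r. nra.
Qed.

Lemma exists_pow (u M : R) : 1 < u -> exists k, M <= u ^+ k.
Proof.
move=> hu.
exists (Num.Def.trunc (`|M| / (u - 1))).+1.
have h := truncnS_gt (`|M| / (u - 1)).
set k := (Num.Def.trunc _).+1 in h *.
have hb : 1 + k%:R * (u-1) <= u ^+ k by apply: bernoulli; exact: ltW.
have hM : M <= `|M| by exact: ler_norm.
have hu1 : 0 < u - 1 by lra.
have : `|M| < k%:R * (u - 1).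
  by rewrite -ltr_pdivrMr.
lra.
Qed.
End Reals.
Arguments exists_pow {R}.


Lemma a_gt0 {R : realType} (c t : R) n : 0 < c -> 0 < aseq c t n.
Proof. move=> hc; exact: powR_gt0. Qed.

Lemma a_sq {R : realType} (c t : R) n : 0 < c -> aseq c t n ^+ 2 = c `^ ((2 - t) * t ^+ n) * aseq c t n.+1.
Proof.
move=> hc0; have hc' : c != 0 by rewrite gt_eqF.
rewrite /aseq expr2 -!powRD ?hc' ?implybT //.
congr (_ `^ _); rewrite exprS; ring.
Qed.
Lemma exists_N0 {R : realType} (c t b : R) (hc0 : 0 < c) (hc1 : c < 1) (ht1 : 1 < t) (ht2 : t < 2)
  (hb0 : 0 < b) (hb1 : b < 1) :
  exists N0, forall j, (N0 <= j)%N -> 2 * c `^ ((2 - t) * t ^+ j) <= b.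
Proof.
have hci : 1 < c^-1 by rewrite invf_gt1.
have [k hk] := exists_pow (c^-1) (2 / b) hci.
have [N0 hN] := exists_pow t (k%:R / (2 - t)) ht1.
exists N0 => j hj.
have hck : c ^+ k <= b / 2.
  rewrite exprVn in hk.
  have hpos : 0 < c ^+ k by exact: exprn_gt0.
  have h1 : c ^+ k * (2 / b) <= c ^+ k * (c ^+ k)^-1 by rewrite ler_pM2l.
  rewrite mulfV ?gt_eqF // in h1.
  have e : c ^+ k = (b / 2) * (c ^+ k * (2 / b)) by field; rewrite gt_eqF.
  rewrite {1}e.
  have hb2 : 0 <= b / 2 by rewrite divr_ge0 // ltW.
  move: hb2 h1; set y := b / 2; set X := c ^+ k * (2 / b) => hy hX.
  nra.
have htj : t ^+ N0 <= t ^+ j by rewrite ler_eXn2l.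
have : k%:R <= (2 - t) * t ^+ j.
  rewrite mulrC -ler_pdivrMr; last (have := ht2; lra).
  exact: le_trans hN htj.
have hc : 0 < c <= 1 by rewrite hc0 ltW.
move=> /(ger_powR hc) h.
rewrite powR_mulrn in h; last exact: ltW.
lra.
Qed.

Definition mm {R : realType} (c t : R) n p := Num.max (nr (iter_F c t n p).1) (nr (iter_F c t n p).2).

Lemma mm_ge0 {R : realType} (c t : R) n p : 0 <= mm c t n p.
Proof. by rewrite /mm le_max nr_ge0. Qed.

Lemma step {R : realType} (c t : R) n p : 0 < c ->
  mm c t n.+1 p <= mm c t n p ^+ 2 + aseq c t n.+1 * mm c t n p.
Proof.
move=> hc.
have ha := a_gt0 c t n.+1 hc.
set A := aseq c t n.+1.
have hm0 := mm_ge0 c t n p.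
have h1 : nr (iter_F c t n p).1 <= mm c t n p by rewrite /mm le_max lexx.
have h2 : nr (iter_F c t n p).2 <= mm c t n p by rewrite /mm le_max lexx orbT.
have hz0 := nr_ge0 (iter_F c t n p).1.
have hw0 := nr_ge0 (iter_F c t n p).2.
rewrite [mm c t n.+1 p]/mm /= ge_max; apply/andP; split.
- apply: le_trans (nrD _ _) _.
  rewrite nrX2 nrM nrC ger0_norm; last exact: ltW.
  rewrite -/A.
  move: hz0 hw0 h1 h2 hm0 ha.
  set z := nr _; set w := nr _; set m := mm _ _ _ _ => hz hw hzm hwm hm hA.
  have e1 : z ^+ 2 <= m ^+ 2 by rewrite ler_pXn2r // nnegrE.
  have e2 : A * w <= A * m by rewrite ler_pM2l.
  lra.
- rewrite nrM nrC ger0_norm; last exact: ltW.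
  rewrite -/A.
  move: hz0 hw0 h1 h2 hm0 ha.
  set z := nr _; set w := nr _; set m := mm _ _ _ _ => hz hw hzm hwm hm hA.
  have e2 : A * z <= A * m by rewrite ler_pM2l.
  have e1 : 0 <= m ^+ 2 by rewrite sqr_ge0.
  lra.
Qed.



Lemma inv_step {R : realType} (c t b : R) j k p : 0 < c -> 0 < b -> b <= 1 ->
  2 * c `^ ((2 - t) * t ^+ j.+1) <= b ->
  mm c t j p <= aseq c t j.+1 * b ^+ k ->
  mm c t j.+1 p <= aseq c t j.+2 * b ^+ k.+1.
Proof.
move=> hc hb0 hb1 hQ hm.
have st := step c t j p hc.
have hsq := a_sq c t j.+1 hc.
have hA := a_gt0 c t j.+1 hc.
have hA2 := a_gt0 c t j.+2 hc.
have hm0 := mm_ge0 c t j p.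
have hB0 : 0 <= b ^+ k by rewrite exprn_ge0 // ltW.
have hB1 : b ^+ k <= 1 by rewrite exprn_ile1 // ltW.
have hQ0 : 0 <= c `^ ((2 - t) * t ^+ j.+1) by exact: powR_ge0.
move: st hsq hQ hm hA hA2 hm0 hB0 hB1 hQ0.
set m' := mm _ _ j.+1 _; set m := mm _ _ j _; set A := aseq _ _ j.+1;
set A2 := aseq _ _ j.+2; set B := b ^+ k; set Q := c `^ _ => st hsq hQ hm hA hA2 hm0 hB0 hB1 hQ0.
have e1 : m ^+ 2 <= (A * B) ^+ 2 by rewrite ler_pXn2r // nnegrE mulr_ge0 // ltW.
have e2 : (A * B) ^+ 2 <= A ^+ 2 * B by rewrite exprMn ler_pM2l ?expr2 ?mulr_ge0 //; [nra | apply: mulr_gt0].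
have e3 : A * m <= A * (A * B) by rewrite ler_pM2l.
have e4 : A ^+ 2 * B * 2 <= A2 * (b * B).
  rewrite hsq.
  have : Q * 2 <= b by lra.
  move=> h. have hAB : 0 <= A2 * B by rewrite mulr_ge0 // ltW.
  have := ler_wpM2r hAB h. lra.
rewrite exprS -/B. rewrite !expr2 in e1 e2 st. lra.
Qed.

Lemma fstc {R : realType} : continuous (fun p : R[i] * R[i] => p.1).
Proof. move=> p; exact: cvg_fst. Qed.
Lemma sndc {R : realType} : continuous (fun p : R[i] * R[i] => p.2).
Proof. move=> p; exact: cvg_snd. Qed.



Lemma Omega_small {R : realType} (c t : R) p eps : Omega c t p -> 0 < eps ->
  exists N, forall n, (N <= n)%N -> mm c t n p < eps.
Proof.
move=> h he.
have h1 : (fun n => (iter_F c t n p).1) @ \oo --> (0:R[i]) := cvg_comp _ _ h (fstc _).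
have h2 : (fun n => (iter_F c t n p).2) @ \oo --> (0:R[i]) := cvg_comp _ _ h (sndc _).
have he' : (0:R[i]) < eps%:C%C by rewrite ltcR.
have [N1 _ hN1] := @cvgr_dist_lt R[i] R[i]^o nat \oo _ (fun n => (iter_F c t n p).1) 0 h1 _ he'.
have [N2 _ hN2] := @cvgr_dist_lt R[i] R[i]^o nat \oo _ (fun n => (iter_F c t n p).2) 0 h2 _ he'.
exists (maxn N1 N2) => n hn.
rewrite /mm gt_max; apply/andP; split.
- have := hN1 n; rewrite /= sub0r => /(_ (leq_trans (leq_maxl _ _) hn)) /nr_lt.
  by rewrite nrN.
- have := hN2 n; rewrite /= sub0r => /(_ (leq_trans (leq_maxr _ _) hn)) /nr_lt.
  by rewrite nrN.
Qed.



Lemma escape {R : realType} (c t : R) p N0 : 0 < c -> c < 1 -> 1 < t -> t < 2 ->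
  Omega c t p -> exists N, (N0 <= N)%N /\ mm c t N p < aseq c t N.+1.
Proof.
move=> hc0 hc1 ht1 ht2 hO.
have hc2 : 0 < c / 2 by rewrite divr_gt0.
have [N1' hN1] := Omega_small c t p (c / 2) hO hc2.
set N1 := maxn N0 N1'.
case: (pselect (exists N, (N0 <= N)%N /\ mm c t N p < aseq c t N.+1)) => [//|hno].
have hge : forall N, (N0 <= N)%N -> aseq c t N.+1 <= mm c t N p.
  move=> N hN; rewrite leNgt; apply/negP => hlt; apply: hno; by exists N.
have key : forall k, 2 * mm c t (N1 + k) p <= c ^+ (2 ^ k).
  elim=> [|k IH].
    rewrite addn0 expn0 expr1.
    have := hN1 N1 (leq_maxr _ _). lra.
  have st := step c t (N1 + k) p hc0.
  have hg := hge (N1 + k) (leq_trans (leq_maxl _ _) (leq_addr _ _)).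
  have hm0 := mm_ge0 c t (N1 + k) p.
  rewrite addnS expnS mulnC exprM.
  move: st hg hm0 IH; set m' := mm _ _ _.+1 _; set m := mm _ _ _ _;
  set A := aseq _ _ _; set C := c ^+ _ => st hg hm0 IH.
  have e1 : A * m <= m * m by exact: ler_wpM2r.
  have e0 : 0 <= 2 * m by lra.
  have e2 : (2 * m) ^+ 2 <= C ^+ 2 by rewrite ler_pXn2r // nnegrE; lra.
  rewrite !expr2 in st e2. lra.
have ht2' : 1 < 2 / t by rewrite ltr_pdivlMr; lra.
have [k hk] := exists_pow (2 / t) (t ^+ N1.+1) ht2'.
have ht : t ^+ (N1 + k).+1 <= (2 ^ k)%:R.
  rewrite -addSn exprD natrX.
  have -> : (2%:R : R) ^+ k = (2 / t) ^+ k * t ^+ k.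
    by rewrite -exprMn mulfVK // gt_eqF //; lra.
  rewrite ler_pM2r ?exprn_gt0 //; lra.
have hcc : 0 < c <= 1 by rewrite hc0 ltW.
have := ger_powR hcc ht.
rewrite powR_mulrn; last exact: ltW.
have := key k; have := hge (N1 + k) (leq_trans (leq_maxl _ _) (leq_addr _ _)).
have := a_gt0 c t (N1 + k).+1 hc0.
rewrite /aseq => *. lra.
Qed.

Lemma Fmap_cont {R : realType} (c t : R) n : continuous (Fmap c t n).
Proof.
move=> p; rewrite /Fmap.
apply: (@cvg_pair _ _ _ (nbhs p) (nbhs _) (nbhs _)).
  apply: (@cvgD _ R[i]^o _ _ _ (fun x : R[i]*R[i] => x.1 ^+ 2) (fun x => (aseq c t n)%:C%C * x.2)).
    rewrite expr2. apply: cvgM; exact: fstc.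
  apply: cvgM; [exact: cvg_cst| exact: sndc].
apply: cvgM; [exact: cvg_cst| exact: fstc].
Qed.

Lemma iter_cont {R : realType} (c t : R) n : continuous (iter_F c t n).
Proof.
elim: n => [|n IH] /=; first by move=> p; exact: cvg_id.
move=> p. apply: continuous_comp; [exact: IH | exact: Fmap_cont].
Qed.

Lemma nbhs_small {R : realType} (c t : R) N x (e : R) : mm c t N x < e ->
  nbhs x [set y | mm c t N y < e].
Proof.
move=> hx.
set eps := e - mm c t N x.
have he : 0 < eps by rewrite /eps subr_gt0.
have he' : (0:R[i]) < eps%:C%C by rewrite ltcR.
have c1 : (fun y => (iter_F c t N y).1) @ x --> (iter_F c t N x).1 :=
  cvg_comp _ _ (iter_cont c t N x) (fstc _).
have c2 : (fun y => (iter_F c t N y).2) @ x --> (iter_F c t N x).2 :=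
  cvg_comp _ _ (iter_cont c t N x) (sndc _).
have n1 := @cvgr_distC_lt R[i] R[i]^o _ (nbhs x) _ (fun y => (iter_F c t N y).1) _ c1 _ he'.
have n2 := @cvgr_distC_lt R[i] R[i]^o _ (nbhs x) _ (fun y => (iter_F c t N y).2) _ c2 _ he'.
have {n1} n1 := n1 (nbhs_filter x). have {n2} n2 := n2 (nbhs_filter x).
apply: (filterS2 _ _ n1 n2) => y /= /nr_lt h1 /nr_lt h2.
have hz1 : nr (iter_F c t N x).1 <= mm c t N x by rewrite /mm le_max lexx.
have hz2 : nr (iter_F c t N x).2 <= mm c t N x by rewrite /mm le_max lexx orbT.
have d1 := nrD (iter_F c t N x).1 ((iter_F c t N y).1 - (iter_F c t N x).1).
have d2 := nrD (iter_F c t N x).2 ((iter_F c t N y).2 - (iter_F c t N x).2).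
rewrite addrC subrK in d1; rewrite addrC subrK in d2.
rewrite /mm gt_max; apply/andP; split; rewrite /eps in h1 h2; lra.
Qed.

Theorem lemma4p1 (R : realType) (c t b : R)
  (hc0 : 0 < c) (hc1 : c < 1) (ht1 : 1 < t) (ht2 : t < 2)
  (hb0 : 0 < b) (hb1 : b < 1)
  (K : set (R[i] * R[i])) (hK : compact K) (hKO : K `<=` Omega c t) :
  exists n0 : nat, forall n k : nat, (n0 <= n)%N ->
    delta c t K (n + k) <= aseq c t (n + k + 1) * b ^+ k.
Proof.
have [N0 hN0] := exists_N0 c t b hc0 hc1 ht1 ht2 hb0 hb1.
have hb1' : b <= 1 by exact: ltW.
have inv0 : forall j y, (N0 <= j)%N -> mm c t j y <= aseq c t j.+1 ->
    mm c t j.+1 y <= aseq c t j.+2.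
  move=> j y hj hm.
  have := @inv_step R c t b j 0 y hc0 hb0 hb1' (hN0 j.+1 (leqW hj)).
  rewrite expr0 mulr1 expr1 => /(_ hm) h.
  apply: le_trans h _; rewrite ger_pMr ?a_gt0 //.
have cov := (proj1 (compact_near_coveringP K)) hK nat \oo
  (fun n y => mm c t n y <= aseq c t n.+1) _.
have [n1 _ hn1] : \forall n \near \oo, K `<=` (fun y => mm c t n y <= aseq c t n.+1).
  apply: cov => x Kx.
  have [N [hN hlt]] := escape c t x N0 hc0 hc1 ht1 ht2 (hKO x Kx).
  exists ([set y | mm c t N y < aseq c t N.+1], [set n | (N <= n)%N]).
    split; first exact: nbhs_small.
    by exists N.
  move=> [y n] /= [hy hn].
  have : forall d, mm c t (N + d) y <= aseq c t (N + d).+1.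
    elim=> [|d IH]; first by rewrite addn0 ltW.
    rewrite addnS; apply: inv0 => //.
    exact: leq_trans hN (leq_addr _ _).
  by move=> /(_ (n - N)%N); rewrite subnKC.
exists (maxn n1 N0) => n k hn.
have pw : forall y, K y -> mm c t (n + k) y <= aseq c t (n + k).+1 * b ^+ k.
  move=> y Ky; elim: k => [|k IH].
    rewrite addn0 expr0 mulr1; apply: hn1 => //.
    exact: leq_trans (leq_maxl _ _) hn.
  rewrite addnS; apply: inv_step => //.
  apply: hN0; apply: leqW; apply: leq_trans (leq_maxr _ _) _.
  exact: leq_trans hn (leq_addr _ _).
rewrite addn1 /delta.
case: (pselect (K !=set0)) => [[y Ky]|hK0].
  apply: ge_sup.
    by exists (mm c t (n + k) y); exists y.
  by move=> r [z Kz <-]; exact: pw.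
have -> : K = set0 by apply/seteqP; split => // z Kz; apply: hK0; exists z.
rewrite image_set0 sup0 mulr_ge0 // ?exprn_ge0 ?ltW ?a_gt0 //.
Qed.
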